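(* Let $\mathrm T=(T,\mathrm D)$ be a random labeled plane tree and let $\mathrm T^{\mathrm{sym}}$ be its symmetrization. Then for any constants $k,K,M$, \begin{align*} &\mathbb P\Big(\sup_{|i-j|\le k}|\ell_{\mathrm T}(\theta_T(i))-\ell_{\mathrm T}(\theta_T(j))|>M\Big)\\ &\le\mathbb P\Big(\sup_{|i-j|\le k}\mathrm{dist}(\theta_T(i),\theta_T(j))>K\Big)+\mathbb P\Big(\sup_{v,w\in V(\mathrm T^{\mathrm{sym}}):\,\mathrm{dist}(v,w)\le K}|\ell_{\mathrm T^{\mathrm{sym}}}(v)-\ell_{\mathrm T^{\mathrm{sym}}}(w)|>M\Big), \end{align*} where $i,j$ range over $\{0,\dots,2|T|-2\}$.
   Context: Plane trees are rooted and encoded by Ulam–Harris words (possibly with vertex types). A labeled plane tree $(t,\mathrm d)$ has real displacements on edges; $\ell_{\mathrm t}(v)$ is the sum of displacements on the path from the root to $v$, and $\mathrm{dist}$ is the graph distance in the tree. The contour exploration $\theta_t:\{0,\dots,2|t|-2\}\to V(t)$ is defined by $\theta_t(0)=\emptyset$ and $\theta_t(i)$ equal to the lexicographically first child of $\theta_t(i-1)$ not among $\theta_t(0),\dots,\theta_t(i-1)$, or the parent of $\theta_t(i-1)$ if there is no such child. For $\sigma=(\sigma_v,v\in V(t))$ with $\sigma_v$ a permutation of the children of $v$, $\sigma(t,\mathrm d)$ reorders the children of each $v$ according to $\sigma_v$ with displacements following their edges; the symmetrization of a random labeled tree $(T,\mathrm D)$ is $\sigma(T,\mathrm D)$ with $\sigma$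 chosen uniformly among all such vectors, conditionally on $(T,\mathrm D)$. *)

(* Defs.v *)
From HB Require Import structures.
From mathcomp Require Import all_boot all_order all_algebra.
From mathcomp Require Import all_classical all_reals all_analysis.
Set Implicit Arguments. Unset Strict Implicit. Unset Printing Implicit Defensive.
Import Order.TTheory GRing.Theory Num.Theory.
Local Open Scope ring_scope.

(* A labeled plane tree: each vertex has an ordered list of children, and the
   edge to each child carries a real displacement. Vertices are addressed by
   Ulam--Harris words (seq nat): [::] is the root, rcons v i is the i-th child
   (0-based) of v. *)
Inductive ltree (R : Type) := LNode of seq (R * ltree R).
Arguments LNode {R}.

Section LTree.
Variable R : realType.
Local Notation lt := (ltree R).

Definition leaf : lt := LNode [::].

Definition kids (t : lt) : seq (R * lt) := let: LNode cs := t in cs.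

Fixpoint subtree (t : lt) (w : seq nat) : lt :=
  match w with
  | [::] => t
  | i :: w' => subtree (nth (0, leaf) (kids t) i).2 w'
  end.

Definition nkids (t : lt) (v : seq nat) : nat := size (kids (subtree t v)).

Fixpoint verts (t : lt) : seq (seq nat) :=
  let: LNode cs := t in
  [::] :: (fix aux (i : nat) (cs : seq (R * lt)) : seq (seq nat) :=
             match cs with
             | [::] => [::]
             | (_, c) :: cs' => map (cons i) (verts c) ++ aux i.+1 cs'
             end) 0%N cs.

Definition tsize (t : lt) : nat := size (verts t).

Fixpoint lab (t : lt) (w : seq nat) : R :=
  match w with
  | [::] => 0
  | i :: w' => let c := nth (0, leaf) (kids t) i in c.1 + lab c.2 w'
  end.

(* graph distance in the tree between Ulam--Harris words v and w:
   |v| + |w| - 2 |v /\ w|, where v /\ w is their longest common prefix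
   (their last common ancestor). *)
Fixpoint lcp_size (v w : seq nat) : nat :=
  match v, w with
  | a :: v', b :: w' => if a == b then (lcp_size v' w').+1 else 0%N
  | _, _ => 0%N
  end.
Definition dist (v w : seq nat) : nat :=
  (size v + size w - 2 * lcp_size v w)%N.

Definition parent (v : seq nat) : seq nat := take (size v).-1 v.

(* contour exploration: cvisited t n = [:: theta(n); theta(n-1); ...; theta(0)].
   theta(0) = root; theta(n+1) = the first (in lexicographic, i.e. index, order)
   child of theta(n) not among theta(0..n), or the parent of theta(n). *)
Fixpoint cvisited (t : lt) (n : nat) : seq (seq nat) :=
  match n with
  | 0%N => [:: [::]]
  | n'.+1 =>
      let s := cvisited t n' in
      let v := head [::] s in
      let k := nkids t v in
      let j := find (fun i => rcons v i \notin s) (iota 0 k) in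
      (if (j < k)%N then rcons v j else parent v) :: s
  end.

Definition theta (t : lt) (n : nat) : seq nat := head [::] (cvisited t n).

(* sigma(t,d): sigma assigns to each vertex v a list sigma v, which should be a
   permutation of [:: 0; ...; k_v - 1]; the new j-th child of v is the old
   (sigma v)_j-th child, carrying its displacement and (reordered) subtree. *)
Fixpoint sigma_apply (sigma : seq nat -> seq nat) (v : seq nat) (t : lt) : lt :=
  let: LNode cs := t in
  let cs' := (fix aux (i : nat) (cs : seq (R * lt)) : seq (R * lt) :=
                match cs with
                | [::] => [::]
                | (d, c) :: cs'' => (d, sigma_apply sigma (rcons v i) c) :: aux i.+1 cs''
                end) 0%N cs in
  LNode [seq nth (0, leaf) cs' j | j <- sigma v].

(* All vectors (sigma_v, v in V(t)) of permutations of children, listed once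
   each: a vector is encoded by the list of the sigma_v along verts t. *)
Definition sigma_vectors (t : lt) : seq (seq (seq nat)) :=
  foldr (fun v acc => [seq p :: a | p <- permutations (iota 0 (nkids t v)), a <- acc])
        [:: [::]] (verts t).

Definition sigma_of (t : lt) (ps : seq (seq nat)) : seq nat -> seq nat :=
  fun w => nth [::] ps (index w (verts t)).

(* Conditional probability, given (T,D) = t, that the symmetrization satisfies
   the event E: sigma uniform among all vectors. *)
Definition sym_prob (E : lt -> bool) (t : lt) : R :=
  (size (sigma_vectors t))%:R^-1 *
  \sum_(ps <- sigma_vectors t) (E (sigma_apply (sigma_of t ps) [::] t))%:R.

Definition cidx (t : lt) : seq nat := iota 0 (2 * tsize t).-1.

Definition ev_label_contour (k M : R) (t : lt) : bool :=
  has (fun i => has (fun j =>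
         (`|i%:R - j%:R| <= k) && (`|lab t (theta t i) - lab t (theta t j)| > M))
       (cidx t)) (cidx t).

Definition ev_dist_contour (k K : R) (t : lt) : bool :=
  has (fun i => has (fun j =>
         (`|i%:R - j%:R| <= k) && ((dist (theta t i) (theta t j))%:R > K))
       (cidx t)) (cidx t).

Definition ev_label_dist (K M : R) (t : lt) : bool :=
  has (fun v => has (fun w =>
         ((dist v w)%:R <= K) && (`|lab t v - lab t w| > M))
       (verts t)) (verts t).

End LTree.

(* Main.v *)
Require Import Defs.
From HB Require Import structures.
From mathcomp Require Import all_boot all_order all_algebra.
From mathcomp Require Import all_classical all_reals all_analysis.
From mathcomp Require Import zify.
Import Order.TTheory GRing.Theory Num.Theory.
Local Open Scope ring_scope.

Section S.
Set Implicit Arguments. Unset Strict Implicit.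
Variable R : realType.
Local Notation lt := (ltree R).

Fixpoint vaux (i : nat) (cs : seq (R * lt)) : seq (seq nat) :=
  match cs with
  | [::] => [::]
  | (_, c) :: cs' => map (cons i) (verts c) ++ vaux i.+1 cs'
  end.
Lemma verts_LNode cs : verts (LNode cs) = [::] :: vaux 0 cs.
Proof. by []. Qed.

Fixpoint saux (sigma : seq nat -> seq nat) (v : seq nat) (i : nat)
  (cs : seq (R * lt)) : seq (R * lt) :=
  match cs with
  | [::] => [::]
  | (d, c) :: cs'' => (d, sigma_apply sigma (rcons v i) c) :: saux sigma v i.+1 cs''
  end.
Lemma sa_LNode sigma v cs : sigma_apply sigma v (LNode cs) =
  LNode [seq nth (0, leaf R) (saux sigma v 0 cs) j | j <- sigma v].
Proof.
simpl. congr LNode. apply: eq_map => j. congr nth.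
elim: cs 0%N => [|[d c] cs IH] n //=. by rewrite IH.
Qed.

Fixpoint valid (t : lt) (u : seq nat) : bool :=
  match u with
  | [::] => true
  | i :: u' => (i < size (kids t))%N && valid (nth (0, leaf R) (kids t) i).2 u'
  end.

Lemma mem_vaux n cs i u : (i :: u \in vaux n cs) =
  [&& (n <= i)%N, (i - n < size cs)%N & (u \in verts (nth (0, leaf R) cs (i - n)%N).2)].
Proof.
elim: cs n => [|[d c] cs IH] n /=.
  by rewrite in_nil; case: (n <= i)%N; case: (i - n)%N.
have Hm : (i :: u \in map (cons n) (verts c)) = (i == n) && (u \in verts c).
  apply/mapP/andP => [[x hx [-> ->]]|[/eqP -> hu]]; first by split.
  by exists u.
rewrite mem_cat IH Hm.
case: (ltngtP i n) => h /=.
- by [].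
- have -> : (i - n = (i - n.+1).+1)%N by lia.
  by rewrite /= ltnS.
- by rewrite h subnn /= orbF.
Qed.

Lemma mem_verts t u : (u \in verts t) = valid t u.
Proof.
elim: u t => [|i u IH] [cs]; first by rewrite verts_LNode inE eqxx.
by rewrite verts_LNode inE /= mem_vaux subn0 IH.
Qed.

Lemma valid_rcons t v j : valid t (rcons v j) = valid t v && (j < nkids t v)%N.
Proof.
elim: v t => [|a v IH] t /=; first by rewrite andbT.
by rewrite IH /nkids /= andbA.
Qed.

Lemma valid_take t v n : valid t v -> valid t (take n v).
Proof.
elim: v t n => [|a v IH] t [|n] //= /andP[h1 h2]; by rewrite h1 IH.
Qed.

Lemma cvisited_valid t n : all (valid t) (cvisited t n).
Proof.
elim: n => [|n IH] //=.
rewrite IH andbT.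
have hv : valid t (head [::] (cvisited t n)).
  by move: IH; case: (cvisited t n) => //= x s /andP[].
case: ifP => hj; first by rewrite valid_rcons hv hj.
exact: valid_take.
Qed.

Lemma theta_valid t n : valid t (theta t n).
Proof.
rewrite /theta; have := cvisited_valid t n.
by case: (cvisited t n) => //= x s /andP[].
Qed.

Definition Hs (sigma : seq nat -> seq nat) v t := forall u, valid t u ->
  perm_eq (sigma (v ++ u)) (iota 0 (size (kids (subtree t u)))).

Lemma nth_saux sigma v n cs i : (i < size cs)%N ->
  nth (0, leaf R) (saux sigma v n cs) i =
  ((nth (0, leaf R) cs i).1, sigma_apply sigma (rcons v (n + i)%N) (nth (0, leaf R) cs i).2).
Proof.
elim: cs n i => [|[d c] cs IH] n [|i] //= h; first by rewrite addn0.
by rewrite IH // addSnnS.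
Qed.

Lemma mem_sig sigma v t i : Hs sigma v t -> (i < size (kids t))%N -> i \in sigma v.
Proof.
move=> H hi; have := H [::] isT; rewrite cats0 /= => /perm_mem ->.
by rewrite mem_iota.
Qed.

Lemma kids_sa sigma v t i : Hs sigma v t -> (i < size (kids t))%N ->
  (index i (sigma v) < size (kids (sigma_apply sigma v t)))%N /\
  nth (0, leaf R) (kids (sigma_apply sigma v t)) (index i (sigma v)) =
  ((nth (0, leaf R) (kids t) i).1, sigma_apply sigma (rcons v i) (nth (0, leaf R) (kids t) i).2).
Proof.
move=> H hi; have hm := mem_sig H hi; move: H hi hm.
case: t => cs H hi hm; rewrite sa_LNode /=.
rewrite size_map index_mem hm; split => //.
by rewrite (nth_map 0%N) ?index_mem // nth_index // nth_saux.
Qed.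

Lemma Hs_child sigma v t i : Hs sigma v t -> (i < size (kids t))%N ->
  Hs sigma (rcons v i) (nth (0, leaf R) (kids t) i).2.
Proof.
move=> H hi u hu; rewrite cat_rcons.
by apply: (H (i :: u)) => /=; rewrite hi hu.
Qed.

Fixpoint phi (sigma : seq nat -> seq nat) v (t : lt) u : seq nat :=
  match u with
  | [::] => [::]
  | i :: u' => index i (sigma v) :: phi sigma (rcons v i) (nth (0, leaf R) (kids t) i).2 u'
  end.

Lemma phi_ok sigma u v t : Hs sigma v t -> valid t u ->
  valid (sigma_apply sigma v t) (phi sigma v t u) /\
  lab (sigma_apply sigma v t) (phi sigma v t u) = lab t u.
Proof.
elim: u v t => [|i u IH] v t H //= /andP[hi hu].
have [h1 h2] := kids_sa H hi.
have [h3 h4] := IH _ _ (Hs_child H hi) hu.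
by rewrite h1 h2 /= h3 h4.
Qed.

Lemma phi_size sigma u v t : size (phi sigma v t u) = size u.
Proof. by elim: u v t => //= i u IH v t; rewrite IH. Qed.

Lemma phi_lcp sigma u1 u2 v t : Hs sigma v t -> valid t u1 -> valid t u2 ->
  lcp_size (phi sigma v t u1) (phi sigma v t u2) = lcp_size u1 u2.
Proof.
elim: u1 u2 v t => [|i u1 IH] [|j u2] v t H //= /andP[hi hu1] /andP[hj hu2].
have hmi := mem_sig H hi; have hmj := mem_sig H hj.
case: (eqVneq i j) hu2 => [<-|nij] hu2; first by rewrite !eqxx IH //; exact: (Hs_child H hi).
have -> : (index i (sigma v) == index j (sigma v)) = false.
  apply/negbTE; apply: contra nij => /eqP e.
  by rewrite -(nth_index 0%N hmi) e nth_index.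
by [].
Qed.

Lemma dist_phi sigma u1 u2 v t : Hs sigma v t -> valid t u1 -> valid t u2 ->
  dist (phi sigma v t u1) (phi sigma v t u2) = dist u1 u2.
Proof. by move=> H h1 h2; rewrite /dist phi_lcp // !phi_size. Qed.

Lemma sv_prop (t : lt) L ps : ps \in foldr (fun v acc =>
    [seq p :: a | p <- permutations (iota 0 (nkids t v)), a <- acc]) [:: [::]] L ->
  forall x, x \in L -> perm_eq (nth [::] ps (index x L)) (iota 0 (nkids t x)).
Proof.
elim: L ps => [|y L IH] ps //= /allpairsP [[p a] [/= hp ha ->]] x.
rewrite inE; case: (eqVneq y x) => [<- _|nyx] /=.
  by rewrite -mem_permutations.
move=> hx; exact: IH.
Qed.

Lemma sv_size (t : lt) L : (0 < size (foldr (fun v acc =>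
    [seq p :: a | p <- permutations (iota 0 (nkids t v)), a <- acc]) [:: [::]] L))%N.
Proof.
elim: L => //= y L IH; rewrite size_allpairs muln_gt0 IH andbT.
have : iota 0 (nkids t y) \in permutations (iota 0 (nkids t y)).
  by rewrite mem_permutations.
by case: (permutations _).
Qed.

Lemma Hs_top t ps : ps \in sigma_vectors t -> Hs (sigma_of t ps) [::] t.
Proof.
move=> hps u hu; rewrite cat0s /sigma_of.
apply: (sv_prop hps); by rewrite mem_verts.
Qed.

Lemma sym_prob1 (E : lt -> bool) t :
  (forall ps, ps \in sigma_vectors t -> E (sigma_apply (sigma_of t ps) [::] t)) ->
  sym_prob E t = 1.
Proof.
rewrite /sym_prob => H.
rewrite -natr_sum (eq_big_seq (fun _ => 1%N)); last by move=> ps /H ->.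
rewrite sum1_size mulVf // pnatr_eq0 -lt0n.
exact: sv_size.
Qed.

Lemma sym_prob_ge0 (E : lt -> bool) t : 0 <= sym_prob E t.
Proof.
rewrite /sym_prob; apply: mulr_ge0; first by rewrite invr_ge0 ler0n.
by apply: sumr_ge0 => ? _; rewrite ler0n.
Qed.

Lemma pointwise (k K M : R) (t : lt) : ev_label_contour k M t -> ~~ ev_dist_contour k K t ->
  sym_prob (ev_label_dist K M) t = 1.
Proof.
move=> /hasP[i hi /hasP[j hj /andP[hk hM]]] hB.
have hd : (dist (theta t i) (theta t j))%:R <= K.
  by move: hB => /hasPn /(_ i hi) /hasPn /(_ j hj); rewrite hk /= -leNgt.
apply: sym_prob1 => ps hps.
have H := Hs_top hps.
have [v1 l1] := phi_ok H (theta_valid t i).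
have [v2 l2] := phi_ok H (theta_valid t j).
apply/hasP; exists (phi (sigma_of t ps) [::] t (theta t i)); first by rewrite mem_verts.
apply/hasP; exists (phi (sigma_of t ps) [::] t (theta t j)); first by rewrite mem_verts.
by rewrite l1 l2 dist_phi ?theta_valid // hd hM.
Qed.

End S.

Local Open Scope classical_set_scope.

Theorem lemma3p2 (R : realType) (d : measure_display) (Omega : measurableType d)
  (P : probability Omega R) (T : Omega -> ltree R) (k K M : R)
  (mA : measurable [set w | ev_label_contour k M (T w)])
  (mB : measurable [set w | ev_dist_contour k K (T w)])
  (mC : measurable_fun setT (fun w => sym_prob (ev_label_dist K M) (T w))) :
  (P [set w | ev_label_contour k M (T w)] <=
   P [set w | ev_dist_contour k K (T w)]
   + \int[P]_w (sym_prob (ev_label_dist K M) (T w))%:E)%E.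
Proof.
set A := [set w | ev_label_contour k M (T w)].
set B := [set w | ev_dist_contour k K (T w)].
have mAB : measurable (A `\` B) by apply: measurableD.
apply: (@le_trans _ _ (P (B `|` (A `\` B)))).
  apply: le_measure; rewrite ?inE //; first exact: measurableU.
  move=> w Aw; case: (boolP (ev_dist_contour k K (T w))) => hb; [by left|right].
  by split => //; apply/negP.
apply: le_trans; first exact: measureU2.
apply: leeD2l.
have := integral_indic P measurableT mAB; rewrite setIT => e.
apply: (@le_trans _ _ (\int[P]_x (\1_(A `\` B) x)%:E)%E); first by rewrite e.
apply: ge0_le_integral => //.
- apply/measurable_realfun.measurable_EFinP; exact: measurable_realfun.measurable_indic.
- by apply/measurable_realfun.measurable_EFinP.
- move=> w _; rewrite lee_fin /indic.
  case: (boolP (w \in A `\` B)) => hw.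
    move: hw; rewrite inE => -[hA hB].
    rewrite (@pointwise _ k K M (T w) hA) //; by apply/negP.
  by rewrite sym_prob_ge0.
Qed.
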